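(* If $X$ is a Banach space such that $X$ or $X^*$ has property $(\alpha)$, then $X$ satisfies property $(A_d)$ for every integer $d\ge2$.
   Context: Let $(r_i)$ be independent Rademacher variables on $(\Omega_0,\mathbb{P})$; $\mathrm{Rad}(Z)$ is the closure in $L^2(\Omega_0;Z)$ of finite sums $\sum r_i\otimes z_i$. Property $(\alpha)$: there is $C$ with $\|\sum_{i,j\le n}a_{ij}r_i\otimes r_j\otimes x_{ij}\|_{\mathrm{Rad}(\mathrm{Rad}(X))}\le C\sup|a_{ij}|\,\|\sum_{i,j\le n}r_i\otimes r_j\otimes x_{ij}\|_{\mathrm{Rad}(\mathrm{Rad}(X))}$ for all $n$, complex $a_{ij}$ and $x_{ij}\in X$. For a finite family $(x_{i_1,\ldots,i_d})$ in $Z$, $N_d([x_{i_1,\ldots,i_d}])=\left(\int_{\Omega_0^d}\|\sum r_{i_1}(t_1)\cdots r_{i_d}(t_d)x_{i_1,\ldots,i_d}\|^2d\mathbb{P}^d\right)^{1/2}$. $X$ has property $(A_d)$ if there is $C>0$ with $|\sum a_{i_1,\ldots,i_d}\langle x^*_{i_1,\ldots,i_d},x_{i_1,\ldots,i_d}\rangle|\le C\sup|a_{i_1,\ldots,i_d}|\,N_d([x_{i_1,\ldots,i_d}])\,N_d([x^*_{i_1,\ldots,i_d}])$ for all finite families of scalars, $x_{i_1,\ldots,i_d}\in X$, $x^*_{i_1,\ldots,i_d}\in X^*$. *)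

(* Defs.v *)
From HB Require Import structures.
From mathcomp Require Import all_boot all_order all_algebra.
From mathcomp Require Import complex.
From mathcomp Require Import all_classical all_reals all_analysis.
Import Order.TTheory GRing.Theory Num.Theory numFieldNormedType.Exports.

Set Implicit Arguments.
Unset Strict Implicit.
Unset Printing Implicit Defensive.

Local Open Scope ring_scope.
Local Open Scope complex_scope.
Local Open Scope classical_set_scope.

Section Rademacher.
Variable R : realType.

(* value of a Rademacher variable on the atom given by a sign bit *)
Definition rsign (b : bool) : R[i] := if b then 1 else -1.

(* Rad(Rad(Z))-norm of the finite sum sum_{i,j<n} r_i (x) r_j (x) x_ij, for a
   vector space V with a (real-valued) norm nrm.  Since the integrand only
   depends on (r_1(t),..,r_n(t)) and (r_1(s),..,r_n(s)), which are i.i.d.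
   uniform on {-1,1}, the double L^2 integral is the average over sign
   vectors. *)
Definition radrad (V : lmodType R[i]) (nrm : V -> R) (n : nat)
    (x : 'I_n -> 'I_n -> V) : R :=
  Num.sqrt ((#|{ffun 'I_n -> bool}|%:R ^+ 2)^-1 *
    \sum_(e1 : {ffun 'I_n -> bool}) \sum_(e2 : {ffun 'I_n -> bool})
      nrm (\sum_(i < n) \sum_(j < n) (rsign (e1 i) * rsign (e2 j)) *: x i j) ^+ 2).

(* N_d of a finite family (x_{i_1,...,i_d}) indexed by multi-indices
   i : 'I_d -> 'I_n, i.e. the L^2(Omega_0^d; Z)-norm of
   sum r_{i_1}(t_1) ... r_{i_d}(t_d) x_{i_1..i_d}, written as the average over
   the 2^(n d) sign configurations e : 'I_d -> ('I_n -> bool). *)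
Definition Nd (V : lmodType R[i]) (nrm : V -> R) (d n : nat)
    (x : {ffun 'I_d -> 'I_n} -> V) : R :=
  Num.sqrt ((#|{ffun 'I_d -> {ffun 'I_n -> bool}}|%:R)^-1 *
    \sum_(e : {ffun 'I_d -> {ffun 'I_n -> bool}})
      nrm (\sum_(i : {ffun 'I_d -> 'I_n})
             (\prod_(k < d) rsign (e k (i k))) *: x i) ^+ 2).

Definition property_alpha (V : lmodType R[i]) (P : V -> Prop) (nrm : V -> R) :=
  exists C : R, forall (n : nat) (a : 'I_n -> 'I_n -> R[i])
    (x : 'I_n -> 'I_n -> V), (forall i j, P (x i j)) ->
    radrad nrm (fun i j => a i j *: x i j)
      <= C * (\big[Num.max/0]_(i < n) \big[Num.max/0]_(j < n) complex.Re `|a i j|)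
           * radrad nrm x.

Section Banach.
Variable X : completeNormedModType R[i].

Definition normX (x : X) : R := complex.Re `|x|.

Definition is_dual (f : X -> R[i]) : Prop :=
  (forall (a : R[i]) (x y : X), f (a *: x + y) = a * f x + f y) /\ continuous (f : X -> (R[i] : numFieldType)^o).

Definition dual_norm (f : X -> R[i]) : R :=
  sup [set complex.Re `|f x| | x in [set x : X | normX x <= 1]].

Definition property_A (d : nat) : Prop :=
  exists C : R, 0 < C /\
    forall (n : nat) (a : {ffun 'I_d -> 'I_n} -> R[i])
      (x : {ffun 'I_d -> 'I_n} -> X) (xs : {ffun 'I_d -> 'I_n} -> (X -> R[i])),
      (forall i, is_dual (xs i)) ->
      complex.Re `|\sum_(i : {ffun 'I_d -> 'I_n}) a i * xs i (x i)|
        <= C * (\big[Num.max/0]_(i : {ffun 'I_d -> 'I_n}) complex.Re `|a i|)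
             * Nd normX x * Nd dual_norm xs.

End Banach.
End Rademacher.

(* Main.v *)
Require Import Defs.
From HB Require Import structures.
From mathcomp Require Import all_boot all_order all_algebra.
From mathcomp Require Import complex.
From mathcomp Require Import all_classical all_reals all_analysis.
Import Order.TTheory GRing.Theory Num.Theory numFieldNormedType.Exports.
Local Open Scope ring_scope.
Local Open Scope complex_scope.
Set Implicit Arguments.
Unset Strict Implicit.
Unset Printing Implicit Defensive.
From mathcomp Require Import ring lra.
Section CSsec.
Variable R : realType.

Lemma CS (T : finType) (u v : T -> R) :
  \sum_i u i * v i <= Num.sqrt (\sum_i u i ^+ 2) * Num.sqrt (\sum_i v i ^+ 2).
Proof.
set A := \sum_i u i ^+ 2; set B := \sum_i v i ^+ 2; set S := \sum_i u i * v i.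
have A0 : 0 <= A by apply: sumr_ge0 => i _; apply: sqr_ge0.
have B0 : 0 <= B by apply: sumr_ge0 => i _; apply: sqr_ge0.
have key : S ^+ 2 <= A * B.
  have [Bz|Bp] := eqVneq B 0.
    have vz : forall i, v i = 0.
      move=> i; apply/eqP; rewrite -sqrf_eq0; apply/eqP.
      by apply: (psumr_eq0P _ Bz) => // j _; apply: sqr_ge0.
    have -> : S = 0 by rewrite /S big1 // => i _; rewrite vz mulr0.
    by rewrite expr0n /= mulr_ge0.
  have Bpos : 0 < B by rewrite lt0r Bp.
  have E : \sum_i (B * u i - S * v i) ^+ 2 = B * (A * B - S ^+ 2).
    transitivity (\sum_i (B ^+ 2 * u i ^+ 2 - (2 * B * S) * (u i * v i) + S ^+ 2 * v i ^+ 2)).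
      by apply: eq_bigr => i _; ring.
    rewrite big_split sumrB /= -!mulr_sumr -/A -/B -/S; ring.
  have : 0 <= B * (A * B - S ^+ 2) by rewrite -E; apply: sumr_ge0 => i _; apply: sqr_ge0.
  by rewrite pmulr_rge0 // subr_ge0.
have [Sn|Sp] := lerP S 0.
  by apply: (le_trans Sn); rewrite mulr_ge0 // sqrtr_ge0.
rewrite -sqrtrM // -[S](ger0_norm (ltW Sp)) -sqrtr_sqr.
exact: (ler_wsqrtr key).
Qed.
End CSsec.
Section Gen1.
Variable R : realType.
Local Notation C := (R[i]).
Local Notation rs := (rsign R).

Lemma rsM b c : rs (b == c) = rs b * rs c.
Proof. by case: b; case: c; rewrite /rsign /= ?mulr1 ?mul1r ?mulrNN ?mulr1. Qed.

Lemma rs2 b : rs b * rs b = 1.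
Proof. by case: b; rewrite /rsign ?mulr1 ?mulrNN ?mulr1. Qed.

Definition nC (z : C) : R := complex.Re `|z|.

Lemma normC_def (z : C) : `|z| = (nC z)%:C.
Proof. by rewrite /nC normc_def. Qed.

Lemma nC_ge0 z : 0 <= nC z.
Proof. by rewrite -ler0c -normC_def. Qed.

Lemma nCM z w : nC (z * w) = nC z * nC w.
Proof. by rewrite /nC normrM [`|z|]normC_def [`|w|]normC_def /= !mulr0 subr0. Qed.

Lemma nCD z w : nC (z + w) <= nC z + nC w.
Proof.
have := ler_normD z w; rewrite [`|z + w|]normC_def [`|z|]normC_def [`|w|]normC_def.
by rewrite -rmorphD lecR.
Qed.

Lemma nC_rs b : nC (rs b) = 1.
Proof. by case: b; rewrite /nC /rsign ?normrN normr1. Qed.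

Lemma nC0 : nC 0 = 0.
Proof. by rewrite /nC normr0. Qed.

Definition avg (S : finType) (f : S -> R) : R := (#|S|%:R)^-1 * \sum_(s : S) f s.

Lemma avg_ge0 (S : finType) (f : S -> R) : (forall s, 0 <= f s) -> 0 <= avg f.
Proof.
move=> H; apply: mulr_ge0; first by rewrite invr_ge0 ler0n.
by apply: sumr_ge0 => s _; apply: H.
Qed.

Lemma avg_le (S : finType) (f g : S -> R) : (forall s, f s <= g s) -> avg f <= avg g.
Proof.
move=> H; apply: ler_wpM2l; first by rewrite invr_ge0 ler0n.
by apply: ler_sum => s _; apply: H.
Qed.

Lemma avgZ (S : finType) (k : R) (f : S -> R) : avg (fun s => k * f s) = k * avg f.
Proof. by rewrite /avg -mulr_sumr mulrCA. Qed.

Lemma avg_ext (S : finType) (f g : S -> R) : (forall s, f s = g s) -> avg f = avg g.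
Proof. by move=> H; rewrite /avg; congr (_ * _); apply: eq_bigr => s _; apply: H. Qed.

Lemma avg_cst (S : finType) (s0 : S) (k : R) : avg (fun _ : S => k) = k.
Proof.
rewrite /avg sumr_const; change (#|S|%:R^-1 * (k *+ #|S|) = k).
rewrite -[k *+ _]mulr_natr mulrCA mulVf ?mulr1 //.
by rewrite pnatr_eq0 -lt0n; apply/card_gt0P; exists s0.
Qed.

Lemma avg_bij (S T : finType) (h : S -> T) (f : T -> R) :
  bijective h -> avg (fun s => f (h s)) = avg f.
Proof.
move=> hb; rewrite /avg (bij_eq_card hb); congr (_ * _).
by rewrite (reindex h) //; apply: onW_bij.
Qed.

Lemma avg_pair (S T : finType) (F : S -> T -> R) :
  avg (fun p : S * T => F p.1 p.2) = avg (fun s => avg (fun t => F s t)).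
Proof.
rewrite /avg card_prod natrM invfM -mulrA; congr (_ * _).
by rewrite -mulr_sumr pair_bigA /=.
Qed.

Lemma avg_exch (S T : finType) (F : S -> T -> R) :
  avg (fun s => avg (fun t => F s t)) = avg (fun t => avg (fun s => F s t)).
Proof.
have E (A B : finType) (G : A -> B -> R) :
  avg (fun a => avg (fun b => G a b)) =
  \sum_a \sum_b (#|A|%:R^-1 * (#|B|%:R^-1 * G a b)).
  rewrite /avg mulr_sumr; apply: eq_bigr => a _.
  by rewrite !mulr_sumr.
rewrite !E exchange_big /=; apply: eq_bigr => t _; apply: eq_bigr => s _.
by rewrite mulrCA.
Qed.

End Gen1.
Section Gen2.
Variable R : realType.
Local Notation C := (R[i]).
Local Notation rs := (rsign R).

Definition shf (T : finType) (s u : {ffun T -> bool}) : {ffun T -> bool} :=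
  [ffun i => u i == s i].

Lemma shfK (T : finType) (s : {ffun T -> bool}) : involutive (shf s).
Proof. by move=> u; apply/ffunP => i; rewrite !ffunE; case: (u i); case: (s i). Qed.

Lemma rs_shf (T : finType) (s u : {ffun T -> bool}) i :
  rs (shf s u i) = rs (u i) * rs (s i).
Proof. by rewrite ffunE rsM. Qed.

Lemma avg_shf (T : finType) (s : {ffun T -> bool}) (F : {ffun T -> bool} -> R) :
  avg (fun u => F (shf s u)) = avg F.
Proof. by apply: avg_bij; exists (shf s); apply: shfK. Qed.

Definition cf (T T' : finType) (A : Type) (h : T' -> T) (e : {ffun T -> A}) :
  {ffun T' -> A} := [ffun i => e (h i)].

Lemma cf_bij (T T' : finType) (A : Type) (h : T' -> T) :
  bijective h -> bijective (@cf T T' A h).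
Proof.
case=> g hg gh; exists (@cf T' T A g) => e; apply/ffunP => i; rewrite !ffunE.
  by rewrite gh.
by rewrite hg.
Qed.

Lemma avg_cf (T T' : finType) (A : finType) (h : T' -> T)
  (F : {ffun T' -> A} -> R) :
  bijective h -> avg F = avg (fun e : {ffun T -> A} => F (cf h e)).
Proof. by move=> hb; rewrite (avg_bij F (cf_bij A hb)). Qed.

Definition sumf (A B : finType) (Z : Type) (g : {ffun A -> Z}) (k : {ffun B -> Z}) :
  {ffun (A + B)%type -> Z} :=
  [ffun s => match s with inl a => g a | inr b => k b end].

Lemma sumf_bij (A B : finType) (Z : finType) :
  bijective (fun p : {ffun A -> Z} * {ffun B -> Z} => sumf p.1 p.2).
Proof.
exists (fun e => (cf inl e, cf inr e)).
  by case=> g k /=; congr (_, _); apply/ffunP => i; rewrite !ffunE.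
by move=> e; apply/ffunP; case=> a; rewrite !ffunE.
Qed.

Lemma cf_sumf_l (A B : finType) (Z : Type) (g : {ffun A -> Z}) (k : {ffun B -> Z}) :
  cf inl (sumf g k) = g.
Proof. by apply/ffunP => i; rewrite !ffunE. Qed.

Lemma cf_sumf_r (A B : finType) (Z : Type) (g : {ffun A -> Z}) (k : {ffun B -> Z}) :
  cf inr (sumf g k) = k.
Proof. by apply/ffunP => i; rewrite !ffunE. Qed.

Lemma avg_marg (A B : finType) (F : {ffun A -> bool} -> {ffun B -> bool} -> R) :
  avg (fun e : {ffun (A + B)%type -> bool} => F (cf inl e) (cf inr e)) =
  avg (fun g => avg (fun k => F g k)).
Proof.
rewrite -(avg_bij _ (@sumf_bij A B bool)) -avg_pair.
by apply: avg_ext => -[g k] /=; rewrite cf_sumf_l cf_sumf_r.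
Qed.

Lemma avg_marg_l (A B : finType) (F : {ffun A -> bool} -> R) :
  avg (fun e : {ffun (A + B)%type -> bool} => F (cf inl e)) = avg F.
Proof.
rewrite (avg_marg (fun g (_ : {ffun B -> bool}) => F g)).
by apply: avg_ext => g; apply: (avg_cst [ffun _ => true]).
Qed.

Lemma avg_marg_r (A B : finType) (F : {ffun B -> bool} -> R) :
  avg (fun e : {ffun (A + B)%type -> bool} => F (cf inr e)) = avg F.
Proof.
rewrite (avg_marg (fun (_ : {ffun A -> bool}) k => F k)).
by apply: (avg_cst [ffun _ => true]).
Qed.

Definition consf (d : nat) (Z : Type) (z : Z) (e : {ffun 'I_d -> Z}) :
  {ffun 'I_d.+1 -> Z} :=
  [ffun t => match unlift ord0 t with Some k => e k | None => z end].

Lemma consf0 d (Z : Type) (z : Z) (e : {ffun 'I_d -> Z}) : consf z e ord0 = z.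
Proof. by rewrite ffunE unlift_none. Qed.

Lemma consfS d (Z : Type) (z : Z) (e : {ffun 'I_d -> Z}) k :
  consf z e (lift ord0 k) = e k.
Proof. by rewrite ffunE liftK. Qed.

Lemma consf_bij d (Z : finType) :
  bijective (fun p : Z * {ffun 'I_d -> Z} => consf p.1 p.2).
Proof.
exists (fun e : {ffun 'I_d.+1 -> Z} => (e ord0, cf (lift ord0) e)).
  by case=> z e /=; rewrite consf0; congr (_, _); apply/ffunP => k; rewrite !ffunE liftK.
move=> e; apply/ffunP => t; rewrite ffunE /=.
by case: unliftP => [k ->|->]; rewrite ?ffunE.
Qed.

End Gen2.
Section Gen3.
Variable R : realType.
Local Notation C := (R[i]).
Local Notation rs := (rsign R).
Variables (V : lmodType C) (nrm : V -> R).

Definition ind (T : finType) (x : T -> V) : R :=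
  avg (fun e : {ffun T -> bool} => nrm (\sum_i rs (e i) *: x i) ^+ 2).

Definition tw (T U : finType) (x : T -> U -> V) : R :=
  avg (fun e : {ffun T -> bool} => avg (fun f : {ffun U -> bool} =>
    nrm (\sum_i \sum_j (rs (e i) * rs (f j)) *: x i j) ^+ 2)).

Lemma ind_ge0 (T : finType) (x : T -> V) : 0 <= ind x.
Proof. by apply: avg_ge0 => e; apply: sqr_ge0. Qed.

Lemma tw_ge0 (T U : finType) (x : T -> U -> V) : 0 <= tw x.
Proof. by apply: avg_ge0 => e; apply: avg_ge0 => f; apply: sqr_ge0. Qed.

Lemma ind_reindex (T T' : finType) (h : T' -> T) (x : T -> V) :
  bijective h -> ind (fun i => x (h i)) = ind x.
Proof.
move=> hb; rewrite /ind (avg_cf _ hb); apply: avg_ext => E.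
rewrite [in RHS](reindex h); last by apply: onW_bij.
by congr (nrm _ ^+ 2); apply: eq_bigr => i _; rewrite ffunE.
Qed.

Lemma tw_reindex (T T' U U' : finType) (h : T' -> T) (k : U' -> U)
  (x : T -> U -> V) :
  bijective h -> bijective k -> tw (fun i j => x (h i) (k j)) = tw x.
Proof.
move=> hb kb; rewrite /tw (avg_cf _ hb); apply: avg_ext => E.
rewrite (avg_cf _ kb); apply: avg_ext => F.
rewrite [in RHS](reindex h); last by apply: onW_bij.
congr (nrm _ ^+ 2); apply: eq_bigr => i _.
rewrite [in RHS](reindex k); last by apply: onW_bij.
by apply: eq_bigr => j _; rewrite !ffunE.
Qed.

End Gen3.
Section Gen3b.
Variable R : realType.
Local Notation C := (R[i]).
Local Notation rs := (rsign R).
Variables (V : lmodType C) (nrm : V -> R).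

Definition padz (Z : zmodType) (T U : finType) (x : T -> U -> Z) :
  (T + U)%type -> (T + U)%type -> Z :=
  fun s t => match s, t with inl i, inr j => x i j | _, _ => 0 end.

Lemma tw_pad (T U : finType) (x : T -> U -> V) : tw nrm (padz x) = tw nrm x.
Proof.
rewrite /tw -[RHS](@avg_marg_l _ _ U); apply: avg_ext => e.
rewrite -[RHS](@avg_marg_r _ T); apply: avg_ext => f.
congr (nrm _ ^+ 2).
rewrite big_sumType /= [X in _ + X]big1 ?addr0; last first.
  by move=> j _; apply: big1 => t _; rewrite scaler0.
apply: eq_bigr => i _; rewrite big_sumType /= big1 ?add0r; last first.
  by move=> ? _; rewrite scaler0.
by apply: eq_bigr => j _; rewrite !ffunE.
Qed.

Definition dg (Z : zmodType) (T : finType) (x : T -> Z) : T -> T -> Z :=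
  fun i j => if i == j then x i else 0.

Lemma tw_dg (T : finType) (x : T -> V) : tw nrm (dg x) = ind nrm x.
Proof.
rewrite /tw -[RHS](avg_cst ([ffun _ => true] : {ffun T -> bool})); apply: avg_ext => e.
rewrite -[LHS](avg_shf e); apply: avg_ext => g.
congr (nrm _ ^+ 2); apply: eq_bigr => i _.
rewrite (bigD1 i) //= /dg eqxx big1 ?addr0; last first.
  by move=> j; rewrite eq_sym => /negbTE ->; rewrite scaler0.
by rewrite rs_shf mulrCA rs2 mulr1.
Qed.

Lemma avg_tw_sign (T U : finType) (x : T -> U -> V) :
  avg (fun u : {ffun (T * U)%type -> bool} =>
    tw nrm (fun i j => rs (u (i, j)) *: x i j)) =
  ind nrm (fun p : T * U => x p.1 p.2).
Proof.
rewrite /tw avg_exch.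
rewrite -[RHS](avg_cst ([ffun _ => true] : {ffun T -> bool})); apply: avg_ext => e.
rewrite avg_exch.
rewrite -[RHS](avg_cst ([ffun _ => true] : {ffun U -> bool})); apply: avg_ext => f.
rewrite /ind -[RHS](avg_shf [ffun p : T * U => e p.1 == f p.2]).
apply: avg_ext => u; congr (nrm _ ^+ 2).
rewrite pair_big /=; apply: eq_bigr => -[i j] _ /=.
by rewrite rs_shf ffunE rsM scalerA mulrC.
Qed.

End Gen3b.
Section Gen4.
Variable R : realType.
Local Notation C := (R[i]).
Local Notation rs := (rsign R).
Variables (V : lmodType C) (nrm : V -> R) (P : V -> Prop).
Hypothesis P0 : P 0.
Hypothesis PD : forall u v, P u -> P v -> P (u + v).
Hypothesis PZ : forall (c : C) u, P u -> P (c *: u).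
Hypothesis HA : property_alpha P nrm.

Lemma radrad_tw n (x : 'I_n -> 'I_n -> V) : radrad nrm x = Num.sqrt (tw nrm x).
Proof.
rewrite /radrad /tw /avg; congr Num.sqrt.
rewrite expr2 invfM -mulrA; congr (_ * _); rewrite mulr_sumr.
by apply: eq_bigr => e1 _.
Qed.

Lemma alpha_sq : exists K : R, 0 <= K /\
  forall n (a : 'I_n -> 'I_n -> C) (x : 'I_n -> 'I_n -> V),
    (forall i j, P (x i j)) -> forall m, 0 <= m -> (forall i j, nC (a i j) <= m) ->
    tw nrm (fun i j => a i j *: x i j) <= K * m ^+ 2 * tw nrm x.
Proof.
case: HA => C0 HC; exists (C0 ^+ 2); split; first exact: sqr_ge0.
move=> n a x Px m m0 am.
have := HC n a x Px; rewrite !radrad_tw.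
set M := \big[Num.max/0]_(i < n) \big[Num.max/0]_(j < n) nC (a i j).
have M0 : 0 <= M by apply: bigmax_ge_id.
have Mm : M <= m.
  apply: bigmax_le => // i _; apply: bigmax_le => // j _; exact: am.
set r1 := Num.sqrt _; set r2 := Num.sqrt _ => H.
have r10 : 0 <= r1 by apply: sqrtr_ge0.
have r20 : 0 <= r2 by apply: sqrtr_ge0.
have H2 : r1 <= `|C0| * m * r2.
  apply: (le_trans H); have [C00|C00] := lerP 0 C0.
    rewrite ger0_norm //; apply: ler_wpM2r => //; exact: ler_wpM2l.
  apply: (@le_trans _ _ 0).
    by rewrite -mulrA nmulr_rle0 // mulr_ge0.
  by rewrite mulr_ge0 // mulr_ge0.
have -> : tw nrm (fun i j => a i j *: x i j) = r1 ^+ 2 by rewrite sqr_sqrtr // tw_ge0.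
have -> : tw nrm x = r2 ^+ 2 by rewrite sqr_sqrtr // tw_ge0.
have -> : C0 ^+ 2 * m ^+ 2 * r2 ^+ 2 = (`|C0| * m * r2) ^+ 2.
  by rewrite !exprMn real_normK // num_real.
by rewrite !expr2; apply: ler_pM.
Qed.

Lemma alpha_rect : exists K : R, 0 <= K /\
  forall (T U : finType) (a : T -> U -> C) (x : T -> U -> V),
    (forall i j, P (x i j)) -> forall m, 0 <= m -> (forall i j, nC (a i j) <= m) ->
    tw nrm (fun i j => a i j *: x i j) <= K * m ^+ 2 * tw nrm x.
Proof.
case: alpha_sq => K [K0 HK]; exists K; split => // T U a x Px m m0 am.
have HF : forall (W : finType) (b : W -> W -> C) (y : W -> W -> V),
    (forall i j, P (y i j)) -> (forall i j, nC (b i j) <= m) ->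
    tw nrm (fun i j => b i j *: y i j) <= K * m ^+ 2 * tw nrm y.
  move=> W b y Py bm; have hb := enum_val_bij W.
  rewrite -(tw_reindex nrm (fun i j => b i j *: y i j) hb hb).
  rewrite -(tw_reindex nrm y hb hb); apply: HK => [i j|//|i j]; [exact: Py|exact: bm].
rewrite -tw_pad -[tw nrm x]tw_pad.
have -> : padz (fun i j => a i j *: x i j) = (fun s t => padz a s t *: padz x s t).
  by apply/funext => -[i|i]; apply/funext => -[j|j] //=; rewrite scaler0.
apply: HF.
  by move=> [i|i] [j|j] //=.
by move=> [i|i] [j|j] //=; rewrite nC0.
Qed.

Lemma ind_contr : exists K : R, 0 <= K /\
  forall (T : finType) (a : T -> C) (x : T -> V),
    (forall i, P (x i)) -> forall m, 0 <= m -> (forall i, nC (a i) <= m) ->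
    ind nrm (fun i => a i *: x i) <= K * m ^+ 2 * ind nrm x.
Proof.
case: alpha_rect => K [K0 HK]; exists K; split => // T a x Px m m0 am.
rewrite -!tw_dg.
have -> : dg (fun i => a i *: x i) = (fun i j => dg a i j *: dg x i j).
  by apply/funext => i; apply/funext => j; rewrite /dg; case: eqP; rewrite ?scaler0.
apply: HK => //.
  by move=> i j; rewrite /dg; case: eqP.
by move=> i j; rewrite /dg; case: eqP; rewrite ?nC0.
Qed.

Lemma tw_ind_equiv : exists K : R, 0 <= K /\
  forall (T U : finType) (x : T -> U -> V), (forall i j, P (x i j)) ->
    ind nrm (fun p : T * U => x p.1 p.2) <= K * tw nrm x /\
    tw nrm x <= K * ind nrm (fun p : T * U => x p.1 p.2).
Proof.
case: alpha_rect => K [K0 HK]; exists K; split => // T U x Px; split.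
  rewrite -avg_tw_sign -[K * _](avg_cst ([ffun _ => true] : {ffun (T * U)%type -> bool})).
  apply: avg_le => u; apply: le_trans (HK _ _ _ _ Px 1 ler01 _) _.
    by move=> i j; rewrite nC_rs.
  by rewrite expr1n mulr1.
have -> : tw nrm x = avg (fun u : {ffun (T * U)%type -> bool} =>
    tw nrm (fun i j => rs (u (i, j)) *: (rs (u (i, j)) *: x i j))).
  rewrite -[LHS](avg_cst ([ffun _ => true] : {ffun (T * U)%type -> bool})).
  apply: avg_ext => u; congr (tw nrm _).
  by apply/funext => i; apply/funext => j; rewrite scalerA rs2 scale1r.
rewrite -avg_tw_sign -avgZ; apply: avg_le => u.
apply: le_trans (HK _ _ _ (fun i j => rs (u (i, j)) *: x i j) _ 1 ler01 _) _.
- by move=> i j; apply: PZ.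
- by move=> i j; rewrite nC_rs.
by rewrite expr1n mulr1.
Qed.

End Gen4.
Section Gen5.
Variable R : realType.
Local Notation C := (R[i]).
Local Notation rs := (rsign R).
Variables (V : lmodType C) (nrm : V -> R).

Definition prd d n (x : {ffun 'I_d -> 'I_n} -> V) : R :=
  avg (fun e : {ffun 'I_d -> {ffun 'I_n -> bool}} =>
     nrm (\sum_(I : {ffun 'I_d -> 'I_n}) (\prod_(k < d) rs (e k (I k))) *: x I) ^+ 2).

Lemma Nd_prd d n (x : {ffun 'I_d -> 'I_n} -> V) : Nd nrm x = Num.sqrt (prd x).
Proof. by []. Qed.

Lemma prd_ge0 d n (x : {ffun 'I_d -> 'I_n} -> V) : 0 <= prd x.
Proof. by apply: avg_ge0 => e; apply: sqr_ge0. Qed.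

Lemma prd_step d n (x : {ffun 'I_d.+1 -> 'I_n} -> V) :
  prd x = avg (fun t : {ffun 'I_n -> bool} =>
    prd (fun J : {ffun 'I_d -> 'I_n} => \sum_i rs (t i) *: x (consf i J))).
Proof.
rewrite /prd -(avg_bij _ (consf_bij d {ffun 'I_n -> bool})).
rewrite (avg_pair (fun (t : {ffun 'I_n -> bool}) (e' : {ffun 'I_d -> {ffun 'I_n -> bool}}) => nrm (\sum_(I : {ffun 'I_d.+1 -> 'I_n})
   (\prod_(k < d.+1) rs (consf t e' k (I k))) *: x I) ^+ 2)).
apply: avg_ext => t; apply: avg_ext => e'; congr (nrm _ ^+ 2).
rewrite (reindex (fun p : 'I_n * {ffun 'I_d -> 'I_n} => consf p.1 p.2)) /=; last first.
  by apply: onW_bij; apply: consf_bij.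
rewrite -(pair_big xpredT xpredT (fun i J => (\prod_(k < d.+1) rs (consf t e' k (consf i J k))) *: x (consf i J))) /=.
rewrite exchange_big /=; apply: eq_bigr => J _; rewrite scaler_sumr.
apply: eq_bigr => i _; rewrite big_ord_recl !consf0 scalerA; congr (_ *: _).
rewrite mulrC; congr (_ * _); apply: eq_bigr => k _; by rewrite !consfS.
Qed.

Lemma prd_1 n (x : {ffun 'I_1 -> 'I_n} -> V) : prd x = ind nrm x.
Proof.
have hb : bijective (fun i : 'I_n => [ffun _ : 'I_1 => i]).
  exists (fun I : {ffun 'I_1 -> 'I_n} => I ord0); first by move=> i; rewrite ffunE.
  by move=> I; apply/ffunP => k; rewrite ffunE (ord1 k).
have gb : bijective (fun g : {ffun 'I_n -> bool} => [ffun _ : 'I_1 => g]).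
  exists (fun e : {ffun 'I_1 -> {ffun 'I_n -> bool}} => e ord0); first by move=> g; rewrite ffunE.
  by move=> e; apply/ffunP => k; rewrite ffunE (ord1 k).
rewrite -(ind_reindex nrm x hb) /prd -(avg_bij _ gb) /ind; apply: avg_ext => g.
congr (nrm _ ^+ 2); rewrite (reindex _ (onW_bij _ hb)) /=; apply: eq_bigr => i _.
by rewrite big_ord1 !ffunE.
Qed.

Lemma avg_ind_tw (T U : finType) (z : T -> U -> V) :
  avg (fun t : {ffun U -> bool} => ind nrm (fun J => \sum_i rs (t i) *: z J i)) =
  tw nrm z.
Proof.
rewrite /tw avg_exch /ind; apply: avg_ext => t; apply: avg_ext => u.
congr (nrm _ ^+ 2); apply: eq_bigr => J _; rewrite scaler_sumr.
by apply: eq_bigr => i _; rewrite scalerA.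
Qed.

End Gen5.
Section Gen6.
Variable R : realType.
Local Notation C := (R[i]).
Local Notation rs := (rsign R).
Variables (V : lmodType C) (nrm : V -> R) (P : V -> Prop).
Hypothesis P0 : P 0.
Hypothesis PD : forall u v, P u -> P v -> P (u + v).
Hypothesis PZ : forall (c : C) u, P u -> P (c *: u).
Hypothesis HA : property_alpha P nrm.

Lemma lerKl (k a b : R) : 0 <= k -> a <= b -> k * a <= k * b.
Proof. by move=> k0 ab; apply: ler_wpM2l. Qed.

Lemma P_sum (T : finType) (c : T -> C) (y : T -> V) :
  (forall i, P (y i)) -> P (\sum_i c i *: y i).
Proof.
move=> Py; apply: (big_ind P) => // i _; exact: PZ.
Qed.

Lemma prd_ind_equiv d : exists K : R, 0 <= K /\
  forall n (x : {ffun 'I_d.+1 -> 'I_n} -> V), (forall I, P (x I)) ->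
    prd nrm x <= K * ind nrm x /\ ind nrm x <= K * prd nrm x.
Proof.
elim: d => [|d [K [K0 HK]]].
  by exists 1; split => // n x Px; rewrite prd_1 mul1r.
case: (tw_ind_equiv P0 PZ HA) => K' [K'0 HK'].
exists (K * K'); split; first exact: mulr_ge0.
move=> n x Px.
pose z := fun (J : {ffun 'I_d.+1 -> 'I_n}) (i : 'I_n) => x (consf i J).
have Pz : forall J i, P (z J i) by move=> J i; apply: Px.
have hb : bijective (fun p : {ffun 'I_d.+1 -> 'I_n} * 'I_n => consf p.2 p.1).
  case: (consf_bij d.+1 ('I_n)) => g g1 g2.
  exists (fun I => ((g I).2, (g I).1)).
    by case=> J i /=; rewrite (g1 (i, J)).
  by move=> I /=; rewrite -[RHS]g2; case: (g I).
have Eind : ind nrm x = ind nrm (fun p => z p.1 p.2).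
  by rewrite /z (ind_reindex nrm x hb).
have [H1 H2] := HK' _ _ z Pz.
rewrite prd_step; split.
  apply: (@le_trans _ _ (K * tw nrm z)).
    rewrite -avg_ind_tw -avgZ; apply: avg_le => t.
    have Py : forall J, P (\sum_i rs (t i) *: x (consf i J)) by move=> J; apply: P_sum.
    exact: (HK _ _ Py).1.
  rewrite -mulrA; apply: (lerKl K0); rewrite Eind; exact: H2.
rewrite Eind; apply: (le_trans H1).
rewrite [K * K']mulrC -mulrA; apply: lerKl => //.
rewrite -avg_ind_tw -avgZ; apply: avg_le => t.
have Py : forall J, P (\sum_i rs (t i) *: x (consf i J)) by move=> J; apply: P_sum.
exact: (HK _ _ Py).2.
Qed.

Lemma prd_mult d : exists K : R, 0 <= K /\
  forall n (a : {ffun 'I_d.+1 -> 'I_n} -> C) (x : {ffun 'I_d.+1 -> 'I_n} -> V),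
    (forall I, P (x I)) -> forall m, 0 <= m -> (forall I, nC (a I) <= m) ->
    prd nrm (fun I => a I *: x I) <= K * m ^+ 2 * prd nrm x.
Proof.
case: (prd_ind_equiv d) => K [K0 HK].
case: (ind_contr P0 HA) => Kc [Kc0 HKc].
exists (K * Kc * K); split; first by rewrite !mulr_ge0.
move=> n a x Px m m0 am.
have Pax : forall I, P (a I *: x I) by move=> I; apply: PZ.
apply: (le_trans (HK _ _ Pax).1).
apply: (@le_trans _ _ (K * (Kc * m ^+ 2 * ind nrm x))).
  by apply: lerKl => //; apply: HKc.
rewrite -!mulrA; apply: lerKl => //; apply: lerKl => //.
rewrite [K * (m * _)]mulrCA; apply: lerKl => //; rewrite [X in _ <= X]mulrCA; apply: lerKl => //.
exact: (HK _ _ Px).2.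
Qed.

End Gen6.
Section Fin.
Variable R : realType.
Local Notation C := (R[i]).
Local Notation rs := (rsign R).
Variable X : completeNormedModType R[i].
Local Notation nX := (@normX R X).

Lemma normX_def (x : X) : `|x| = (nX x)%:C.
Proof. by rewrite /normX RRe_real // ger0_real. Qed.

Lemma nC_R (r : R) : nC r%:C = `|r|.
Proof. by rewrite /nC normc_def /= expr0n /= addr0 sqrtr_sqr. Qed.

Lemma normX_ge0 (x : X) : 0 <= nX x.
Proof. by rewrite -ler0c -normX_def. Qed.

Lemma normXZ (c : C) (x : X) : nX (c *: x) = nC c * nX x.
Proof.
by rewrite /normX normrZ [`|c|]normC_def normX_def /= !mulr0 subr0.
Qed.

Lemma normXD (x y : X) : nX (x + y) <= nX x + nX y.
Proof.
by have := ler_normD x y; rewrite !normX_def -rmorphD lecR.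
Qed.

Lemma normX_eq0 (x : X) : nX x = 0 -> x = 0.
Proof. by move=> h; apply/normr0_eq0; rewrite normX_def h. Qed.


Section Dual.
Variable f : X -> C.
Hypothesis fd : is_dual f.

Lemma dual0 : f 0 = 0.
Proof.
case: fd => lin _; have := lin 1 0 0; rewrite scaler0 addr0 mul1r.
by move/(congr1 (fun t => t - f 0)); rewrite subrr addrK.
Qed.

Lemma dualD x y : f (x + y) = f x + f y.
Proof. by case: fd => lin _; rewrite -[x]scale1r lin mul1r scale1r. Qed.

Lemma dualZ (c : C) x : f (c *: x) = c * f x.
Proof. by case: fd => lin _; rewrite -[c *: x]addr0 lin dual0 addr0. Qed.

Lemma dual_bounded : exists M : R, forall x, nC (f x) <= M * nX x.
Proof.
case: fd => _ cf.
have := cvgr_dist_lt _ _ (cf 0) _ (@ltr01 C).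
move=> H; have [e /= e0 He] := (nbhs_norm0P).1 (H _).
have eR : e = (complex.Re e)%:C by rewrite RRe_real // gtr0_real.
have Re0 : 0 < complex.Re e by rewrite -ltcR -eR.
set d := complex.Re e / 2.
have d0 : 0 < d by rewrite divr_gt0.
exists d^-1 => x.
have [x0|xn0] := eqVneq (nX x) 0.
  by rewrite (normX_eq0 x0) dual0 nC0 mulr_ge0 // ?normX_ge0 // invr_ge0 ltW.
have N0 : 0 < nX x by rewrite lt0r xn0 normX_ge0.
set z := ((d / nX x)%:C) *: x.
have dN0 : 0 <= d / nX x by rewrite divr_ge0 // ltW.
have nz : nX z = d by rewrite normXZ nC_R ger0_norm // divfK // gt_eqF.
have := He z; rewrite /= normX_def nz eR ltcR dual0 sub0r normrN.
have dRe : d < complex.Re e.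
  by rewrite /d ltr_pdivrMr // ltr_pMr // ltr1n.
move=> /(_ dRe); rewrite normC_def -[1]/(1%:C) ltcR /z dualZ nCM nC_R ger0_norm //.
move=> h; rewrite ler_pdivlMl //; apply: ltW.
by rewrite -[nX x]mul1r -ltr_pdivrMr // mulrAC.
Qed.

Lemma dual_le y : nC (f y) <= dual_norm f * nX y.
Proof.
have [M HM] := dual_bounded.
set S := [set nC (f x) | x in [set x : X | normX x <= 1]]%classic.
have hs : has_sup S.
  split; first by exists (nC (f 0)); exists 0 => //=; rewrite /normX normr0.
  exists `|M| => _ [x /= x1 <-]; apply: (le_trans (HM x)).
  apply: (le_trans (ler_norm _)); rewrite normrM [`|nX x|]ger0_norm ?normX_ge0 //.
  by rewrite -[X in _ <= X]mulr1 ler_wpM2l.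
have [y0|yn0] := eqVneq (nX y) 0.
  by rewrite (normX_eq0 y0) dual0 nC0 /normX normr0 /= mulr0.
have N0 : 0 < nX y by rewrite lt0r yn0 normX_ge0.
set z := ((nX y)^-1%:C) *: y.
have nz : nX z = 1 by rewrite normXZ nC_R ger0_norm ?invr_ge0 ?normX_ge0 // mulVf.
have Sz : S (nC (f z)) by exists z => //=; rewrite /= nz.
have := sup_upper_bound hs Sz; rewrite /z dualZ nCM nC_R ger0_norm ?invr_ge0 ?normX_ge0 //.
by rewrite ler_pdivrMl // mulrC.
Qed.

End Dual.

Lemma is_dual0 : @is_dual R X 0.
Proof.
split; first by move=> a x y /=; rewrite mulr0 addr0.
by move=> x; apply: cst_continuous.
Qed.

Lemma is_dualD (f g : X -> C) : @is_dual R X f -> @is_dual R X g -> @is_dual R X (f + g).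
Proof.
move=> [lf cf] [lg cg]; split.
  move=> a x y; change (f (a *: x + y) + g (a *: x + y) = a * (f x + g x) + (f y + g y)).
  by rewrite lf lg mulrDr addrACA.
by move=> x; exact: (continuousD (cf x) (cg x)).
Qed.

Lemma is_dualZ (c : C) (f : X -> C) : @is_dual R X f -> @is_dual R X (c *: f).
Proof.
move=> [lf cf]; split.
  move=> a x y; change (c * f (a *: x + y) = a * (c * f x) + c * f y).
  by rewrite lf mulrDr mulrCA.
have -> : c *: f = (fun x => c * f x) by [].
move=> x; have H := @continuousZl_tmp _ (R[i] : numFieldType)^o _ f c x (cf x); exact H.
Qed.

End Fin.
Section Pairing.
Variable R : realType.
Local Notation C := (R[i]).
Local Notation rs := (rsign R).

Definition rho d n (e : {ffun 'I_d -> {ffun 'I_n -> bool}}) (I : {ffun 'I_d -> 'I_n}) : C :=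
  \prod_(k < d) rs (e k (I k)).

Lemma rho_shf d n (s e : {ffun 'I_d -> {ffun 'I_n -> bool}}) I :
  rho [ffun k => shf (s k) (e k)] I = rho e I * rho s I.
Proof. by rewrite /rho -big_split /=; apply: eq_bigr => k _; rewrite ffunE rs_shf. Qed.

Lemma ortho d n (I J : {ffun 'I_d -> 'I_n}) :
  \sum_(e : {ffun 'I_d -> {ffun 'I_n -> bool}}) (rho e I * rho e J) =
  if I == J then #|{ffun 'I_d -> {ffun 'I_n -> bool}}|%:R else 0.
Proof.
case: eqP => [<-|neq].
  rewrite (eq_bigr (fun _ => 1)); first by rewrite sumr_const.
  by move=> e _; rewrite /rho -big_split /= big1 // => k _; rewrite rs2.
have : ~~ [forall k, I k == J k].
  by apply/negP => /forallP h; apply: neq; apply/ffunP => k; apply/eqP; exact: h k.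
rewrite negb_forall => /existsP [k hk].
pose s := [ffun k' : 'I_d => [ffun i : 'I_n => ~~ ((k' == k) && (i == I k))]].
pose h := fun e : {ffun 'I_d -> {ffun 'I_n -> bool}} => [ffun k' => shf (s k') (e k')].
have hK : involutive h.
  by move=> e; apply/ffunP => k'; rewrite !ffunE shfK.
have rsL : forall L : {ffun 'I_d -> 'I_n}, rho s L = rs (~~ (L k == I k)).
  move=> L; rewrite /rho (bigD1 k) //= big1 ?mulr1; first by rewrite !ffunE eqxx.
  by move=> k' /negbTE nk; rewrite !ffunE nk.
set S := \sum_e _.
have : S = - S.
  rewrite {1}/S (reindex_inj (inv_inj hK)) /S -sumrN; apply: eq_bigr => e _.
  rewrite !rho_shf !rsL eqxx eq_sym (negbTE hk) /rsign /=.
  by rewrite mulrN1 mulr1 mulNr.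
move/eqP; rewrite -subr_eq0 opprK -mulr2n mulrn_eq0 /=.
by move/eqP.
Qed.

Variable X : completeNormedModType R[i].

Lemma dual_sum (f : X -> C) (T : finType) (c : T -> C) (y : T -> X) :
  is_dual f -> f (\sum_i c i *: y i) = \sum_i c i * f (y i).
Proof.
move=> fd; apply: (big_rec2 (fun a b => f a = b)); first by rewrite dual0.
by move=> i a b _ <-; rewrite dualD // dualZ.
Qed.

Lemma fun_sum_eval (T : finType) (c : T -> C) (g : T -> X -> C) (y : X) :
  (\sum_i c i *: g i) y = \sum_i c i * g i y.
Proof. by rewrite fct_sumE. Qed.

Lemma pairing d n (x : {ffun 'I_d -> 'I_n} -> X) (phi : {ffun 'I_d -> 'I_n} -> X -> C) :
  (forall I, is_dual (phi I)) ->
  \sum_(e : {ffun 'I_d -> {ffun 'I_n -> bool}})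
     (\sum_I rho e I *: phi I) (\sum_J rho e J *: x J) =
  #|{ffun 'I_d -> {ffun 'I_n -> bool}}|%:R * \sum_I phi I (x I).
Proof.
move=> pd.
transitivity (\sum_e \sum_I \sum_J (rho e I * rho e J) * phi I (x J)).
  apply: eq_bigr => e _; rewrite fun_sum_eval; apply: eq_bigr => I _.
  by rewrite dual_sum // mulr_sumr; apply: eq_bigr => J _; rewrite mulrA.
rewrite exchange_big /= mulr_sumr; apply: eq_bigr => I _.
rewrite exchange_big /=.
rewrite (bigD1 I) //= -mulr_suml ortho eqxx big1 ?addr0 //.
by move=> J /negbTE nJ; rewrite -mulr_suml ortho eq_sym nJ mul0r.
Qed.

End Pairing.
Section Final.
Variable R : realType.
Local Notation C := (R[i]).
Local Notation rs := (rsign R).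
Variable X : completeNormedModType R[i].

Lemma nC_sum (T : finType) (F : T -> C) : nC (\sum_i F i) <= \sum_i nC (F i).
Proof.
apply: (big_ind2 (fun a b => nC a <= b)); first by rewrite nC0.
  by move=> a b c e h1 h2; apply: (le_trans (nCD _ _)); apply: lerD.
by [].
Qed.

Lemma pair_bound d n (x : {ffun 'I_d -> 'I_n} -> X) (phi : {ffun 'I_d -> 'I_n} -> X -> C) :
  (forall I, is_dual (phi I)) ->
  nC (\sum_I phi I (x I)) <= Nd (@dual_norm R X) phi * Nd (@normX R X) x.
Proof.
move=> pd.
set N := #|{ffun 'I_d -> {ffun 'I_n -> bool}}|.
have N0 : (0 < N)%N by apply/card_gt0P; exists [ffun _ => [ffun _ => true]].
have N0' : (0 : R) < N%:R by rewrite ltr0n.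
set F := fun e : {ffun 'I_d -> {ffun 'I_n -> bool}} => \sum_I rho R e I *: phi I.
set Y := fun e : {ffun 'I_d -> {ffun 'I_n -> bool}} => \sum_J rho R e J *: x J.
have Fd : forall e, is_dual (F e).
  move=> e; apply: (big_ind (@is_dual R X)); first exact: is_dual0.
    by move=> f g; apply: is_dualD.
  by move=> I _; apply: is_dualZ.
set a := \sum_e dual_norm (F e) ^+ 2.
set b := \sum_e normX (Y e) ^+ 2.
have H1 : N%:R * nC (\sum_I phi I (x I)) <= Num.sqrt a * Num.sqrt b.
  rewrite -[N%:R](ger0_norm (ler0n _ N)) -nC_R -nCM rmorph_nat -pairing //.
  apply: (le_trans (nC_sum _)).
  apply: (@le_trans _ _ (\sum_e dual_norm (F e) * normX (Y e))).
    by apply: ler_sum => e _; apply: dual_le.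
  exact: CS.
have H2 : Nd (@dual_norm R X) phi * Nd (@normX R X) x = N%:R^-1 * (Num.sqrt a * Num.sqrt b).
  rewrite !Nd_prd /prd /avg -/N -/a -/b.
  have a0 : 0 <= a by apply: sumr_ge0 => e _; apply: sqr_ge0.
  have b0 : 0 <= b by apply: sumr_ge0 => e _; apply: sqr_ge0.
  have i0 : (0 : R) <= N%:R^-1 by rewrite invr_ge0 ler0n.
  by rewrite !sqrtrM // mulrACA -expr2 sqr_sqrtr.
by rewrite H2 -(ler_pM2l N0') mulrA mulfV ?mul1r // gt_eqF.
Qed.

End Final.

Lemma sqrt_bound (R : realType) (K m p q : R) : 0 <= K -> 0 <= m -> 0 <= q ->
  p <= K * m ^+ 2 * q -> Num.sqrt p <= (Num.sqrt K + 1) * m * Num.sqrt q.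
Proof.
move=> K0 m0 q0 h; apply: (le_trans (ler_wsqrtr h)).
have -> : K * m ^+ 2 * q = K * q * m ^+ 2 by rewrite mulrAC.
rewrite (sqrtrM _ (mulr_ge0 K0 q0)) sqrtr_sqr ger0_norm // sqrtrM //.
rewrite mulrAC.
apply: ler_wpM2r; first exact: sqrtr_ge0.
by apply: ler_wpM2r => //; rewrite lerDl.
Qed.

Theorem proposition3p4 (R : realType) (X : completeNormedModType R[i]) :
  property_alpha (fun _ : X => True) (@normX R X) \/
  property_alpha (@is_dual R X) (@dual_norm R X) ->
  forall d : nat, (2 <= d)%N -> property_A X d.
Proof.
move=> H d; case: d => [//|d] _.
case: H => [HX|HD].
  have [K [K0 HK]] := @prd_mult R X (@normX R X) (fun _ => True) I
     (fun _ _ _ _ => I) (fun _ _ _ => I) HX d.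
  exists (Num.sqrt K + 1); split.
    by apply: ltr_wpDl; [exact: sqrtr_ge0 | exact: ltr01].
  move=> n a x xs Hd.
  have m0 := bigmax_ge_id (index_enum {ffun 'I_d.+1 -> 'I_n}) 0 xpredT (fun i => nC (a i)).
  have am : forall I, nC (a I) <= \big[Num.max/0]_(i : {ffun 'I_d.+1 -> 'I_n}) nC (a i).
    by move=> I; apply: le_bigmax.
  have -> : \sum_i a i * xs i (x i) = \sum_i xs i (a i *: x i).
    by apply: eq_bigr => i _; rewrite dualZ.
  apply: (le_trans (pair_bound _ Hd)).
  rewrite [X in _ <= X]mulrC; apply: lerKl; first exact: sqrtr_ge0.
  rewrite !Nd_prd; apply: sqrt_bound => //; first exact: prd_ge0.
  by apply: HK.
have [K [K0 HK]] := @prd_mult R _ (@dual_norm R X) (@is_dual R X) (@is_dual0 R X)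
   (@is_dualD R X) (@is_dualZ R X) HD d.
exists (Num.sqrt K + 1); split.
  by apply: ltr_wpDl; [exact: sqrtr_ge0 | exact: ltr01].
move=> n a x xs Hd.
have m0 := bigmax_ge_id (index_enum {ffun 'I_d.+1 -> 'I_n}) 0 xpredT (fun i => nC (a i)).
have am : forall I, nC (a I) <= \big[Num.max/0]_(i : {ffun 'I_d.+1 -> 'I_n}) nC (a i).
  by move=> I; apply: le_bigmax.
have -> : \sum_i a i * xs i (x i) = \sum_i (a i *: xs i) (x i) by [].
have Hd' : forall I, is_dual (a I *: xs I) by move=> I; apply: is_dualZ.
apply: (le_trans (pair_bound _ Hd')).
rewrite mulrC [X in _ <= X]mulrAC [X in _ <= X]mulrC; apply: lerKl; first exact: sqrtr_ge0.
rewrite !Nd_prd; apply: sqrt_bound => //; first exact: prd_ge0.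
by apply: HK.
Qed.
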